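(* Let $k\ge3$. Let $C$ be a cycle of length $2k$ and $P$ a path of length $2k$ such that $E(C)\cap E(P)=\emptyset$ and $V(C)\cap V(P)\ne\emptyset$. If $H:=C\cup P$ has girth at least $2k-2$, then $H$ can be decomposed into two paths whose lengths lie in $\{2k-1,2k,2k+1\}$.
   Context: Graphs are finite and simple; length = number of edges; girth = length of a shortest cycle. A decomposition of a graph is a set of subgraphs whose edge sets partition its edge set. *)

(* Defs.v *)
(* Graphs are given implicitly by edge sets of vertex sequences
   over an arbitrary eqType of vertices. *)
From mathcomp Require Import all_boot.
Set Implicit Arguments. Unset Strict Implicit. Unset Printing Implicit Defensive.

Section Graphs.
Variable T : eqType.

Definition sedge (a b x y : T) : bool :=
  ((a == x) && (b == y)) || ((a == y) && (b == x)).

Definition path_edge (p : seq T) (x y : T) : bool :=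
  has (fun ab => sedge ab.1 ab.2 x y) (zip p (behead p)).

Definition cycle_edge (c : seq T) (x y : T) : bool :=
  if c is a :: _ then path_edge (rcons c a) x y else false.

Definition is_path (p : seq T) (n : nat) : bool := uniq p && (size p == n.+1).

Definition is_cycle (c : seq T) (n : nat) : bool :=
  uniq c && (size c == n) && (3 <= n).

End Graphs.

(* Main.v *)
Require Import Defs.
From mathcomp Require Import all_boot zify.
Set Implicit Arguments. Unset Strict Implicit. Unset Printing Implicit Defensive.


Section Gen.
Variable T : eqType.
Implicit Types (s t pre suf : seq T) (x y z v w h : T).

Lemma sedgeC x y a b : sedge x y a b = sedge y x a b.
Proof. by rewrite /sedge; case: (x == a) (y == b) (x == b) (y == a) => [] [] [] []. Qed.
Lemma sedgeC2 x y a b : sedge x y a b = sedge x y b a.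
Proof. by rewrite /sedge orbC. Qed.
Lemma sedge_refl x y : sedge x y x y.
Proof. by rewrite /sedge !eqxx. Qed.
Lemma sedge_trans x y a b u w : sedge x y a b -> sedge a b u w = sedge x y u w.
Proof.
rewrite /sedge => /orP [/andP[/eqP-> /eqP->] | /andP[/eqP-> /eqP->]] //.
by case: (b == u) (a == w) (b == w) (a == u) => [] [] [] [].
Qed.
Lemma sedge_memx x y a b : sedge x y a b -> (a == x) || (a == y).
Proof. by rewrite /sedge => /orP [/andP[/eqP-> _] | /andP[_ /eqP->]]; rewrite eqxx ?orbT. Qed.
Lemma sedge_memy x y a b : sedge x y a b -> (b == x) || (b == y).
Proof. by rewrite sedgeC2 => /sedge_memx. Qed.

Lemma pe_nil x y : path_edge [::] x y = false. Proof. by []. Qed.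
Lemma pe_1 h x y : path_edge [:: h] x y = false. Proof. by []. Qed.
Lemma pe_cons2 h z s x y :
  path_edge [:: h, z & s] x y = sedge h z x y || path_edge (z :: s) x y.
Proof. by []. Qed.

Lemma pe_cat h s t x y :
  path_edge (h :: s ++ t) x y = path_edge (h :: s) x y || path_edge (last h s :: t) x y.
Proof.
elim: s h => [|z s IH] h /=; first by case: t.
by rewrite pe_cons2 IH pe_cons2 orbA.
Qed.

Lemma pe_rcons h s z x y :
  path_edge (h :: rcons s z) x y = path_edge (h :: s) x y || sedge (last h s) z x y.
Proof. by rewrite -cats1 pe_cat pe_cons2 pe_1 orbF. Qed.

Lemma pe_mid s v t x y :
  path_edge (s ++ v :: t) x y = path_edge (rcons s v) x y || path_edge (v :: t) x y.
Proof.
case: s => [|h s] //=.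
rewrite -/(path_edge (h :: s ++ v :: t) x y) pe_cat pe_cons2.
rewrite -/(path_edge (h :: rcons s v) x y) pe_rcons; by rewrite orbA.
Qed.

Lemma pe_rev s x y : path_edge (rev s) x y = path_edge s x y.
Proof.
elim: s => [|h s IH] //.
case: s IH => [|z s] IH //.
rewrite rev_cons pe_cons2 -IH.
case E: (rev (z :: s)) => [|h' t]; first by move: E; rewrite rev_cons; case: (rev s).
rewrite pe_rcons -E.
have -> : last h' t = z.
  by rewrite -(last_cons h) -E rev_cons last_rcons.
by rewrite sedgeC orbC.
Qed.

Lemma pe_catl s t x y : path_edge s x y -> path_edge (s ++ t) x y.
Proof.
case: s => [|h s] //= H.
by rewrite -/(path_edge (h :: s ++ t) x y) pe_cat H.
Qed.

Lemma pe_cons h t x y : path_edge t x y -> path_edge (h :: t) x y.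
Proof. by case: t => [|z t] //= H; rewrite pe_cons2 H orbT. Qed.

Lemma pe_catr s t x y : path_edge t x y -> path_edge (s ++ t) x y.
Proof. by elim: s => [|h s IH] //= /IH; apply: pe_cons. Qed.

Lemma pe_mem s x y : path_edge s x y -> (x \in s) && (y \in s).
Proof.
elim: s => [|h s IH] //.
case: s IH => [|z s] IH //.
rewrite pe_cons2 => /orP [H|/IH /andP[H1 H2]].
  move: (sedge_memx H) (sedge_memy H).
  by rewrite !inE => /orP[]/eqP-> /orP[]/eqP->; rewrite !eqxx ?orbT.
by rewrite in_cons H1 orbT in_cons H2 orbT.
Qed.

Lemma pe_neq s x y : uniq s -> path_edge s x y -> x != y.
Proof.
elim: s => [|h s IH] //.
case: s IH => [|z s] IH //.
rewrite pe_cons2 => /andP [Hh Hu] /orP [H|H]; last exact: IH.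
move: Hh; rewrite inE negb_or => /andP[hz _].
move: H; rewrite /sedge => /orP [/andP[/eqP<- /eqP<-] | /andP[/eqP<- /eqP<-]] //.
by rewrite eq_sym.
Qed.

Lemma ce_cons h s x y : cycle_edge (h :: s) x y = path_edge (h :: rcons s h) x y.
Proof. by []. Qed.

Lemma pe_ce s x y : path_edge s x y -> cycle_edge s x y.
Proof. case: s => [|h s] // H; by rewrite ce_cons pe_rcons H. Qed.

Lemma ce_rot s t x y : cycle_edge (s ++ t) x y = cycle_edge (t ++ s) x y.
Proof.
case: s => [|h s]; first by rewrite cats0.
case: t => [|v t]; first by rewrite cats0.
rewrite !cat_cons !ce_cons !rcons_cat !pe_cat !rcons_cons !pe_cons2 !pe_rcons.
by case: (path_edge (h :: s) x y); case: (path_edge (v :: t) x y);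
   case: (sedge (last h s) v x y); case: (sedge (last v t) h x y).
Qed.

Lemma ce_rev s x y : cycle_edge (rev s) x y = cycle_edge s x y.
Proof.
case: s => [|h s] //.
rewrite rev_cons -cats1 ce_rot cat1s !ce_cons.
by rewrite -[in RHS]pe_rev rev_cons rev_rcons rcons_cons.
Qed.

End Gen.


Section CL.
Variable T : eqType.
Implicit Types (s t pre suf a b : seq T) (x y z v w h : T).

Lemma pe_mid_disj s v t x y : uniq (s ++ v :: t) ->
  ~~ (path_edge (rcons s v) x y && path_edge (v :: t) x y).
Proof.
move=> U; apply/negP => /andP [H1 H2].
have U2 : uniq (v :: t) by move: U; rewrite cat_uniq => /and3P[].
have := pe_neq U2 H2.
move: (pe_mem H1) (pe_mem H2); rewrite !mem_rcons => /andP[x1 y1] /andP[x2 y2].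
move: U; rewrite cat_uniq => /and3P[_ /hasPn Hd _].
have Ex : x = v.
  move: x1; rewrite inE => /orP[/eqP //|xs]; by move: (Hd x x2); rewrite xs.
have Ey : y = v.
  move: y1; rewrite inE => /orP[/eqP //|ys]; by move: (Hd y y2); rewrite ys.
by rewrite Ex Ey eqxx.
Qed.

Lemma CL pre suf a b v w :
  uniq (v :: a ++ w :: b) -> uniq (pre ++ v :: suf) ->
  (forall x y, ~~ (cycle_edge (v :: a ++ w :: b) x y && path_edge (pre ++ v :: suf) x y)) ->
  b != [::] ->
  (forall z, z \in pre -> z \notin v :: w :: b) ->
  (forall z, z \in suf -> z \notin w :: v :: a) ->
  [/\ uniq (pre ++ v :: rcons (rev b) w) /\ uniq (w :: rev a ++ v :: suf),
      size (pre ++ v :: rcons (rev b) w) = (size pre + size b + 1).+1,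
      size (w :: rev a ++ v :: suf) = (size a + size suf + 1).+1,
      forall x y, (cycle_edge (v :: a ++ w :: b) x y || path_edge (pre ++ v :: suf) x y) =
        (path_edge (pre ++ v :: rcons (rev b) w) x y || path_edge (w :: rev a ++ v :: suf) x y) &
      forall x y, ~~ (path_edge (pre ++ v :: rcons (rev b) w) x y && path_edge (w :: rev a ++ v :: suf) x y)].
Proof.
move=> Uc Up Hdis bn0 Hpre Hsuf.
have Uc' := Uc.
move: Uc'; rewrite cons_uniq mem_cat inE !negb_or cat_uniq cons_uniq
  => /and5P [/and3P[va vw vb] ua /hasPn hab wb ub].
have wa : w \notin a by apply: hab; rewrite inE eqxx.
have Up' := Up.
move: Up'; rewrite cat_uniq cons_uniq => /and3P [upre /hasPn hps /andP[vsuf usuf]].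
have EC x y : cycle_edge (v :: a ++ w :: b) x y =
   path_edge (v :: rcons a w) x y || path_edge (w :: rcons b v) x y.
  by rewrite ce_cons rcons_cat rcons_cons -cat_cons pe_mid rcons_cons.
have EP x y : path_edge (pre ++ v :: suf) x y =
   path_edge (rcons pre v) x y || path_edge (v :: suf) x y by rewrite pe_mid.
have E1 x y : path_edge (pre ++ v :: rcons (rev b) w) x y =
   path_edge (rcons pre v) x y || path_edge (w :: rcons b v) x y.
  rewrite pe_mid; congr (_ || _).
  by rewrite -pe_rev rev_cons rev_rcons revK.
have E2 x y : path_edge (w :: rev a ++ v :: suf) x y =
   path_edge (v :: rcons a w) x y || path_edge (v :: suf) x y.
  rewrite -cat_cons pe_mid; congr (_ || _).
  by rewrite -pe_rev rev_rcons rev_cons revK.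
split; first split.
- rewrite cat_uniq upre andTb; apply/andP; split.
    apply/hasPn => z zX; apply/negP => zp; move: (Hpre z zp).
    by move: zX; rewrite !inE mem_rcons inE mem_rev => ->.
  by rewrite cons_uniq mem_rcons inE mem_rev negb_or vw vb rcons_uniq mem_rev rev_uniq wb ub.
- have wsuf : w \notin suf.
    by apply/negP => ws; move: (Hsuf w ws); rewrite inE eqxx.
  rewrite cons_uniq mem_cat mem_rev inE !negb_or wa eq_sym vw wsuf /=.
  rewrite cat_uniq rev_uniq ua andTb (cons_uniq v suf) vsuf usuf !andbT.
  apply/hasPn => z zs; rewrite mem_rev; apply/negP => za.
  move: zs; rewrite inE => /orP[/eqP E|zs]; first by move: va; rewrite -E za.
  by move: (Hsuf z zs); rewrite !inE za !orbT.
- by rewrite size_cat /= size_rcons size_rev addn1 !addnS.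
- by rewrite /= size_cat size_rev /= addn1 !addnS.
- move=> x y; rewrite EC EP E1 E2.
  by case: (path_edge (v :: rcons a w) x y); case: (path_edge (w :: rcons b v) x y);
     case: (path_edge (rcons pre v) x y); case: (path_edge (v :: suf) x y).
- move=> x y; rewrite E1 E2.
  apply/negP => /andP [/orP [HA|HX] /orP [HY|HB]].
  + by move: (Hdis x y); rewrite EC EP; case/andP; split; apply/orP; left.
  + by move: (pe_mid_disj x y Up); rewrite HA HB.
  + have uY : uniq (v :: rcons a w).
      by rewrite cons_uniq mem_rcons inE negb_or vw va rcons_uniq wa ua.
    have nxy := pe_neq uY HY.
    have inXY z : z \in w :: rcons b v -> z \in v :: rcons a w -> (z == v) || (z == w).
      case: (z =P v) => [//|nzv]; case: (z =P w) => [//|nzw].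
      rewrite !inE !mem_rcons !inE => /orP [/eqP//|/orP[/eqP//|zb]].
      move=> /orP [/eqP//|/orP[/eqP//|za]].
      by move: (hab z); rewrite inE zb orbT za => /(_ isT).
    move: (pe_mem HX) (pe_mem HY) => /andP[xX yX] /andP[xY yY].
    have hx := inXY x xX xY; have hy := inXY y yX yY.
    move: HX; rewrite pe_rcons => /orP [H|H].
      move: (pe_mem H) => /andP [xb yb].
      have vwb : v \notin w :: b by rewrite inE negb_or vw vb.
      have : (x == v) || (y == v).
        case/orP: hx => /eqP ex; first by rewrite ex eqxx.
        case/orP: hy => /eqP ey; first by rewrite ey eqxx orbT.
        by move: nxy; rewrite ex ey eqxx.
      by case/orP => /eqP E; move: vwb; rewrite -E ?xb ?yb.
    case: b bn0 hab wb ub vb H {Hdis EC E1 Hpre inXY xX yX Uc} => [|b0 b'] // _ hab wb ub vb H.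
    have lb : last w (b0 :: b') \in b0 :: b' by rewrite /= mem_last.
    have lw : last w (b0 :: b') != w by apply/negP => /eqP E; move: wb; rewrite -E lb.
    have lv : last w (b0 :: b') != v by apply/negP => /eqP E; move: vb; rewrite -E lb.
    move: (sedge_memx H) (sedge_memy H) => /orP[]/eqP ex /orP[]/eqP ey.
    * by move: hx; rewrite ex (negbTE lw) (negbTE lv).
    * by move: hx; rewrite ex (negbTE lw) (negbTE lv).
    * by move: hy; rewrite ey (negbTE lw) (negbTE lv).
    * by move: nxy; rewrite ex ey eqxx.
  + by move: (Hdis x y); rewrite EC EP; case/andP; split; apply/orP; right.
Qed.
End CL.


Definition Hdis (T : eqType) (c p : seq T) := forall x y, ~~ (cycle_edge c x y && path_edge p x y).
Definition Hgir (T : eqType) k (c p : seq T) := forall (d : seq T) (m : nat), is_cycle d m ->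
     (forall x y, cycle_edge d x y -> cycle_edge c x y || path_edge p x y) -> 2 * k - 2 <= m.
Definition Concl (T : eqType) k (c p : seq T) := exists (q1 q2 : seq T) (l1 l2 : nat),
    [/\ is_path q1 l1 /\ is_path q2 l2,
        l1 \in [:: 2 * k - 1; 2 * k; 2 * k + 1],
        l2 \in [:: 2 * k - 1; 2 * k; 2 * k + 1],
        (forall x y, (cycle_edge c x y || path_edge p x y) =
                     (path_edge q1 x y || path_edge q2 x y)) &
        (forall x y, ~~ (path_edge q1 x y && path_edge q2 x y))].

Section M.
Variable T : eqType.
Implicit Types (s t pre suf a b cs mid post : seq T) (x y z v w h : T).

Lemma pe_sedge s (a b : T) x y : path_edge s a b -> sedge a b x y -> path_edge s x y.
Proof.
rewrite /path_edge => /hasP [e he Hs] Hab; apply/hasP; exists e => //.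
by rewrite -(sedge_trans _ _ Hs).
Qed.

Lemma ce_sedge s (a b : T) x y : cycle_edge s a b -> sedge a b x y -> cycle_edge s x y.
Proof. case: s => [|h s] //; rewrite !ce_cons; exact: pe_sedge. Qed.

Lemma ce_flip v cs x y : cycle_edge (v :: rev cs) x y = cycle_edge (v :: cs) x y.
Proof.
by rewrite -ce_rev rev_cons revK -cats1 ce_rot.
Qed.

Lemma Concl_ext k (c c' p : seq T) : (forall x y, cycle_edge c x y = cycle_edge c' x y) ->
  Concl k c' p -> Concl k c p.
Proof.
move=> E [q1 [q2 [l1 [l2 [H1 H2 H3 H4 H5]]]]].
exists q1, q2, l1, l2; split => // x y; by rewrite E.
Qed.

Lemma Concl_rev k (c p : seq T) : Concl k c (rev p) -> Concl k c p.
Proof.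
move=> [q1 [q2 [l1 [l2 [H1 H2 H3 H4 H5]]]]].
exists q1, q2, l1, l2; split => // x y; by rewrite -pe_rev.
Qed.

Lemma CLc k pre suf a b v w :
  uniq (v :: a ++ w :: b) -> uniq (pre ++ v :: suf) ->
  Hdis (v :: a ++ w :: b) (pre ++ v :: suf) ->
  b != [::] ->
  (forall z, z \in pre -> z \notin v :: w :: b) ->
  (forall z, z \in suf -> z \notin w :: v :: a) ->
  size pre + size b + 1 \in [:: 2 * k - 1; 2 * k; 2 * k + 1] ->
  size a + size suf + 1 \in [:: 2 * k - 1; 2 * k; 2 * k + 1] ->
  Concl k (v :: a ++ w :: b) (pre ++ v :: suf).
Proof.
move=> Uc Up Hd bn Hpre Hsuf L1 L2.
have [[U1 U2] S1 S2 E D] := CL Uc Up Hd bn Hpre Hsuf.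
exists (pre ++ v :: rcons (rev b) w), (w :: rev a ++ v :: suf),
  (size pre + size b + 1), (size a + size suf + 1).
by split => //; split; rewrite /is_path ?U1 ?U2 ?S1 ?S2 eqxx.
Qed.

Section Fix.
Variables (k : nat) (c p : seq T).
Hypothesis Hd : Hdis c p.
Hypothesis Hg : Hgir k c p.

Lemma ear_len v mid w a : uniq (v :: mid ++ w :: rev a) ->
  (forall x y, path_edge (v :: rcons mid w) x y -> path_edge p x y) ->
  (forall x y, path_edge (v :: rcons a w) x y -> cycle_edge c x y) ->
  2 * k - 2 <= size mid + size a + 2.
Proof.
move=> U HP HC.
case E: (size mid + size a) => [|n].
  move: E; case: mid U HP => [|??] //; case: a HC => [|??] // HC _ HP _.
  move: (Hd v w); rewrite (HC v w) ?(HP v w) //=; by rewrite pe_cons2 sedge_refl.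
rewrite -E.
have -> : size mid + size a + 2 = size (v :: mid ++ w :: rev a).
  by rewrite /= size_cat /= size_rev; lia.
apply: (Hg (d := v :: mid ++ w :: rev a)); first by rewrite /is_cycle U eqxx /= size_cat /= size_rev; lia.
move=> x y; rewrite ce_cons rcons_cat rcons_cons -cat_cons pe_mid => /orP [H|H].
  by apply/orP; right; apply: HP.
apply/orP; left; apply: HC; move: H; by rewrite -pe_rev rev_cons rev_rcons revK.
Qed.

End Fix.

Lemma pe_in s pre post x y : path_edge s x y -> path_edge (pre ++ s ++ post) x y.
Proof. by move=> H; apply: pe_catr; apply: pe_catl. Qed.

Lemma uniq_mid s1 s2 s3 : uniq (s1 ++ s2 ++ s3) -> uniq s2.
Proof.
move/subseq_uniq; apply; apply: (subseq_trans (prefix_subseq s2 s3)); exact: suffix_subseq.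
Qed.

Lemma two_nb k (c : seq T) pre v m1 w1 m2 w2 post :
  4 <= k -> Hdis c (pre ++ v :: m1 ++ w1 :: m2 ++ w2 :: post) ->
  Hgir k c (pre ++ v :: m1 ++ w1 :: m2 ++ w2 :: post) ->
  uniq (pre ++ v :: m1 ++ w1 :: m2 ++ w2 :: post) ->
  size (pre ++ v :: m1 ++ w1 :: m2 ++ w2 :: post) = (2 * k).+1 ->
  cycle_edge c v w1 -> cycle_edge c v w2 -> False.
Proof.
set p := pre ++ _ => k4 Hd Hg Up Sp C1 C2.
have E1 : p = pre ++ (v :: rcons m1 w1) ++ (m2 ++ w2 :: post).
  by rewrite /p /= cat_rcons.
have E2 : p = (pre ++ v :: m1) ++ (w1 :: rcons m2 w2) ++ post.
  by rewrite /p -catA /= cat_rcons.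
have L1 : 2 * k - 2 <= size m1 + size (@nil T) + 2.
  apply: (ear_len Hd Hg (v := v) (w := w1)).
  - by move: Up; rewrite E1 => /uniq_mid; rewrite /= cats1.
  - by move=> x y H; rewrite E1; apply: pe_in.
  - move=> x y; rewrite /= pe_cons2 orbF => H; exact: ce_sedge C1 H.
have L2 : 2 * k - 2 <= size m2 + size [:: v] + 2.
  apply: (ear_len Hd Hg (v := w1) (w := w2)).
  - have : subseq (v :: w1 :: rcons m2 w2) p.
      rewrite /p; apply: (subseq_trans _ (suffix_subseq pre _)).
      rewrite /= eqxx.
      have -> : m1 ++ w1 :: m2 ++ w2 :: post = m1 ++ (w1 :: rcons m2 w2) ++ post.
        by rewrite /= cat_rcons.
      apply: (subseq_trans _ (suffix_subseq m1 _)); exact: prefix_subseq.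
    move=> /subseq_uniq /(_ Up).
    have -> : w1 :: m2 ++ w2 :: rev [:: v] = rot 1 (v :: w1 :: rcons m2 w2).
      by rewrite rot1_cons /=; congr (_ :: _); move: (m2) => m; elim: m => //= ? ? ->.
    by rewrite rot_uniq.
  - by move=> x y H; rewrite E2; apply: pe_in.
  - move=> x y; rewrite /= pe_cons2 pe_cons2 orbF => /orP [H|H].
      by apply: ce_sedge C1 _; rewrite sedgeC.
    exact: ce_sedge C2 H.
move: Sp L1 L2; rewrite /p !size_cat /= !size_cat /= size_cat.
rewrite /=; clear -k4; lia.
Qed.

Lemma in3 k n : 1 <= k -> 2 * k - 1 <= n <= 2 * k + 1 -> n \in [:: 2 * k - 1; 2 * k; 2 * k + 1].
Proof.
move=> k1 /andP [H1 H2]; rewrite !inE.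
case: (n =P 2 * k) => [_|h]; first by rewrite orbT.
case: (n =P 2 * k - 1) => [_|h']; first by [].
have -> : n = 2 * k + 1 by lia.
by rewrite eqxx !orbT.
Qed.

Lemma headfree k pre suf w b v :
  2 <= k -> uniq (v :: w :: b) -> size (v :: w :: b) = 2 * k ->
  uniq (pre ++ v :: suf) -> size (pre ++ v :: suf) = (2 * k).+1 ->
  Hdis (v :: w :: b) (pre ++ v :: suf) ->
  (forall z, z \in pre -> z \notin v :: w :: b) -> size pre <= 1 ->
  w \notin pre ++ v :: suf -> Concl k (v :: w :: b) (pre ++ v :: suf).
Proof.
move=> k2 Uc Sc Up Sp Hd Hpre r1 wp.
have vsuf : v \notin suf by move: Up; rewrite cat_uniq => /and3P [_ _ /andP []].
apply: (CLc (a := [::])) => //.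
- by case: b Sc {Uc Hd Hpre} => //= H; exfalso; lia.
- move=> z zs; rewrite !inE; apply/negP => /orP [/eqP E|/eqP E].
    by move: wp; rewrite -E mem_cat inE zs !orbT.
  by move: vsuf; rewrite -E zs.
- apply: in3; first by lia.
  move: Sc Sp; rewrite /= size_cat /= => Sc Sp; lia.
- apply: in3; first by lia.
  move: Sc Sp; rewrite /= size_cat /= => Sc Sp; lia.
Qed.

Lemma bigr k pre suf cs v :
  4 <= k -> uniq (v :: cs) -> size (v :: cs) = 2 * k ->
  uniq (pre ++ v :: suf) -> size (pre ++ v :: suf) = (2 * k).+1 ->
  Hdis (v :: cs) (pre ++ v :: suf) -> Hgir k (v :: cs) (pre ++ v :: suf) ->
  (forall z, z \in pre -> z \notin v :: cs) -> 2 <= size pre -> size pre <= k ->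
  (forall mid w post, suf = mid ++ w :: post -> w \in cs -> 2 * size pre + size mid < 2 * k) ->
  Concl k (v :: cs) (pre ++ v :: suf).
Proof.
move=> k4 Uc Sc Up Sp Hd Hg Hpre r2 rk Hor.
have Scs : size cs = 2 * k - 1 by move: Sc => /= Sc; lia.
have Ssuf : size suf = 2 * k - size pre by move: Sp; rewrite size_cat /= => Sp; lia.
have vsuf : v \notin suf by move: Up; rewrite cat_uniq => /and3P [_ _ /andP []].
have vcs : v \notin cs by move: Uc => /andP [].
set p := pre ++ v :: suf.
set D := find (mem p) cs.
case: (ltnP D (size pre).-1) => HD.
  exfalso.
  have Dcs : D < size cs by lia.
  have hp : has (mem p) cs by rewrite has_find.
  set w := nth v cs D.
  have wp : w \in p by have := nth_find v hp.
  have wcs : w \in cs by apply: mem_nth.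
  have wsuf : w \in suf.
    move: wp; rewrite /p mem_cat inE => /orP [wpre|/orP [/eqP E|//]].
      by move: (Hpre w wpre); rewrite inE wcs orbT.
    by move: vcs; rewrite -E wcs.
  have [mid [post Esuf]] : exists mid post, suf = mid ++ w :: post.
    by case/splitPr: wsuf => mid post; exists mid, post.
  have Ecs : cs = take D cs ++ w :: drop D.+1 cs.
    by rewrite -(drop_nth v Dcs) cat_take_drop.
  have afree : ~~ has (mem p) (take D cs) by rewrite has_take_leq ?ltnn // ltnW.
  have Ep : p = pre ++ (v :: rcons mid w) ++ post by rewrite /p Esuf /= cat_rcons.
  have L := ear_len Hd Hg (v := v) (mid := mid) (w := w) (a := take D cs).
  have := Hor _ _ _ Esuf wcs.
  suff : 2 * k - 2 <= size mid + size (take D cs) + 2.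
    by rewrite size_takel ?(ltnW Dcs) //; move=> H1 H2; clear -H1 H2 HD r2; lia.
  apply: L.
  - have U1 : uniq (rcons (v :: mid) w) by move: Up; rewrite -/p Ep => /uniq_mid.
    have U3 : uniq (take D cs) by apply: take_uniq; case/andP: Uc.
    have U2 : ~~ has (mem (rcons (v :: mid) w)) (rev (take D cs)).
      apply/hasPn => z; rewrite mem_rev => za; apply/negP => zX.
      have zp : z \in p.
        rewrite Ep mem_cat mem_cat; apply/orP; right; apply/orP; left; exact: zX.
      by move/hasPn: afree => /(_ z za) /negP; apply.
    have -> : v :: mid ++ w :: rev (take D cs) = rcons (v :: mid) w ++ rev (take D cs).
      by rewrite cat_rcons.
    by rewrite cat_uniq rev_uniq U1 U2 U3.
  - by move=> x y H; rewrite -/p Ep; apply: pe_in.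
  - move=> x y H; apply: pe_ce.
    rewrite Ecs -cat_cons -cat_rcons rcons_cons; exact: pe_catl.
set y := (size pre).-1.
have y1 : 0 < y by rewrite /y; lia.
have ycs : y.-1 < size cs by rewrite Scs /y; lia.
set a := take y.-1 cs; set w := nth v cs y.-1; set b := drop y cs.
have Ecs : cs = a ++ w :: b.
  have -> : b = drop y.-1.+1 cs by rewrite /b prednK.
  by rewrite /a /w -(drop_nth v ycs) cat_take_drop.
have free : ~~ has (mem p) (rcons a w).
  rewrite /a /w -take_nth // prednK // has_take_leq //; first by rewrite -leqNgt.
  by rewrite Scs /y; lia.
have Sa : size a = y.-1 by rewrite /a size_takel // ltnW.
have Sb : size b = 2 * k - 1 - y by rewrite /b size_drop Scs.
rewrite Ecs; apply: CLc.
- by rewrite -Ecs.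
- exact: Up.
- by rewrite -Ecs.
- by apply/eqP => E; move: Sb; rewrite E /= /y; lia.
- move=> z zp; move: (Hpre z zp); rewrite Ecs !inE mem_cat !inE.
  by apply: contra => /orP [->|/orP[->|->]]; rewrite ?orbT.
- move=> z zs; rewrite !inE; apply/negP => /orP [/eqP E|/orP [/eqP E|za]].
  + have wp : w \in p by rewrite /p -E mem_cat inE zs !orbT.
    by move/hasPn: free => /(_ w); rewrite mem_rcons mem_head => /(_ isT) /negP; apply.
  + by move: vsuf; rewrite -E zs.
  + have zp : z \in p by rewrite /p mem_cat inE zs !orbT.
    by move/hasPn: free => /(_ z); rewrite mem_rcons inE za orbT => /(_ isT) /negP; apply.
- apply: in3; first by clear -k4; lia.
  rewrite Sb /y; clear -r2 rk k4; lia.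
- apply: in3; first by clear -k4; lia.
  rewrite Sa Ssuf /y; clear -r2 rk k4; lia.
Qed.

Lemma split2 (s : seq T) x y : x \in s -> y \in s -> x != y ->
  exists m1 m2 post, s = m1 ++ x :: m2 ++ y :: post \/ s = m1 ++ y :: m2 ++ x :: post.
Proof.
move=> xs ys nxy.
have [s1 [s2 E]] : exists s1 s2, s = s1 ++ x :: s2.
  by case/splitPr: xs => s1 s2; exists s1, s2.
move: ys; rewrite E mem_cat inE => /orP [ys1|/orP [/eqP yx|ys2]].
- have [t1 [t2 E1]] : exists t1 t2, s1 = t1 ++ y :: t2.
    by case/splitPr: ys1 => t1 t2; exists t1, t2.
  by exists t1, t2, s2; right; rewrite E1 -catA.
- by move: nxy; rewrite yx eqxx.
- have [t1 [t2 E1]] : exists t1 t2, s2 = t1 ++ y :: t2.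
    by case/splitPr: ys2 => t1 t2; exists t1, t2.
  by exists s1, t1, t2; left; rewrite E1.
Qed.

Lemma rev_lastI x (s : seq T) : rev (x :: s) = last x s :: rev (belast x s).
Proof. by rewrite lastI rev_rcons. Qed.

Lemma core4 k pre suf cs v :
  4 <= k -> uniq (v :: cs) -> size (v :: cs) = 2 * k ->
  uniq (pre ++ v :: suf) -> size (pre ++ v :: suf) = (2 * k).+1 ->
  Hdis (v :: cs) (pre ++ v :: suf) -> Hgir k (v :: cs) (pre ++ v :: suf) ->
  (forall z, z \in pre -> z \notin v :: cs) -> size pre <= k ->
  (forall mid w post, suf = mid ++ w :: post -> w \in cs -> 2 * size pre + size mid < 2 * k) ->
  Concl k (v :: cs) (pre ++ v :: suf).
Proof.
move=> k4 Uc Sc Up Sp Hd Hg Hpre rk Hor.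
case: (leqP 2 (size pre)) => r2; first exact: bigr.
have k2 : 2 <= k by lia.
case: cs Uc Sc Hd Hg Hpre Hor => [|w1 b] Uc Sc Hd Hg Hpre Hor; first by move: Sc => /=; lia.
set p := pre ++ v :: suf.
case: (boolP (w1 \in p)) => w1p; last by apply: headfree => //; lia.
set wl := last w1 b.
case: (boolP (wl \in p)) => wlp.
  exfalso.
  have vsuf : v \notin suf by move: Up; rewrite cat_uniq => /and3P [_ _ /andP []].
  have insuf z : z \in w1 :: b -> z \in p -> z \in suf.
    move=> zc; rewrite /p mem_cat inE => /orP [zpre|/orP [/eqP E|//]].
      by move: (Hpre z zpre); rewrite inE zc orbT.
    by move: Uc; rewrite cons_uniq -E zc.
  have w1s := insuf w1 (mem_head _ _) w1p.
  have bn : b != [::] by apply/eqP => E; move: Sc; rewrite E /=; lia.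
  have wlb : wl \in b.
    rewrite /wl; case: (b) bn => //= b0 b' _; exact: mem_last.
  have wls : wl \in suf by apply: insuf => //; rewrite inE wlb orbT.
  have nw : w1 != wl.
    apply/negP => /eqP E; move: Uc => /andP [_ /andP [H _]].
    by move: H; rewrite E wlb.
  have C1 : cycle_edge (v :: w1 :: b) v w1 by rewrite ce_cons rcons_cons pe_cons2 sedge_refl.
  have C2 : cycle_edge (v :: w1 :: b) v wl.
    apply: (ce_sedge (a := wl) (b := v)); last by rewrite sedgeC sedge_refl.
    by rewrite ce_cons pe_rcons /= sedge_refl orbT.
  have [m1 [m2 [post [E|E]]]] := split2 w1s wls nw.
  - by apply: (two_nb (pre := pre) (m1 := m1) (m2 := m2) (post := post) k4 _ _ _ _ C1 C2);
      rewrite -E.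
  - by apply: (two_nb (pre := pre) (m1 := m1) (m2 := m2) (post := post) k4 _ _ _ _ C2 C1);
      rewrite -E.
apply: (Concl_ext (c' := v :: rev (w1 :: b))); first by move=> x y; rewrite ce_flip.
rewrite rev_lastI -/wl.
have Ur : uniq (v :: rev (w1 :: b)) by rewrite cons_uniq mem_rev rev_uniq.
apply: headfree => //.
- by rewrite -rev_lastI.
- by move: Sc; rewrite /= size_rev size_belast.
- by move=> x y; rewrite -rev_lastI ce_flip.
- by move=> z zp; rewrite -rev_lastI in_cons mem_rev -in_cons; apply: Hpre.
Qed.

Lemma find_le (a : pred T) s v t : a v -> find a (s ++ v :: t) <= size s.
Proof.
move=> av; rewrite find_cat; case: ifP => [h|_]; first by rewrite ltnW // -has_find.
by rewrite /= av addn0.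
Qed.

Lemma find_eq (a : pred T) s v t : ~~ has a s -> a v -> find a (s ++ v :: t) = size s.
Proof. by move=> /negbTE h av; rewrite find_cat h /= av addn0. Qed.

Lemma oriented k (c p : seq T) : 4 <= k -> is_cycle c (2 * k) -> is_path p (2 * k) ->
  Hdis c p -> has (mem c) p -> Hgir k c p ->
  find (mem c) p <= find (mem c) (rev p) -> Concl k c p.
Proof.
move=> k4 /andP [/andP [Uc /eqP Sc] _] /andP [Up /eqP Sp] Hd Hh Hg.
move: Up Sp Hd Hg; case: (split_find Hh) => v pre suf vc npre.
rewrite cat_rcons => Up Sp Hd Hg.
rewrite find_eq // rev_cat rev_cons -cats1 -catA cat1s => Hor.
have Hs : size pre + size suf = 2 * k by move: Sp; rewrite size_cat /=; lia.
have [c1 [c2 Ec]] : exists c1 c2, c = c1 ++ v :: c2.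
  by case/splitPr: vc => c1 c2; exists c1, c2.
have Erot x y : cycle_edge c x y = cycle_edge (v :: c2 ++ c1) x y.
  by rewrite Ec ce_rot.
have memc z : (z \in c) = (z \in v :: c2 ++ c1).
  by rewrite Ec !mem_cat !in_cons !mem_cat; case: (z \in c1); case: (z == v); case: (z \in c2).
apply: (Concl_ext Erot); apply: core4 => //.
- by move: Uc; rewrite Ec uniq_catC.
- by rewrite -Sc Ec /= !size_cat /= addnC addnS.
- by move=> x y; rewrite -Erot.
- by move=> d m H1 H2; apply: Hg H1 _ => x y /H2; rewrite Erot.
- by move=> z zp; rewrite -memc; move/hasPn: npre; apply.
- have := find_le (rev suf) (rev pre) vc.
  rewrite size_rev => H; have := leq_trans Hor H; clear -Hs; lia.
- move=> mid w post Esuf wcs.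
  have wc : w \in c by rewrite memc in_cons wcs orbT.
  have E : rev suf ++ v :: rev pre = rev post ++ w :: (rev mid ++ v :: rev pre).
    by rewrite Esuf rev_cat rev_cons -catA cat_rcons.
  rewrite E in Hor; have := leq_trans Hor (find_le _ _ wc).
  rewrite size_rev => H; move: Hs; rewrite Esuf size_cat /= => Hs.
  clear -H Hs; lia.
Qed.

Lemma main4 k (c p : seq T) : 4 <= k -> is_cycle c (2 * k) -> is_path p (2 * k) ->
  Hdis c p -> has (fun v => v \in p) c -> Hgir k c p -> Concl k c p.
Proof.
move=> k4 Hc Hp Hd Hh Hg.
have Hh' : has (mem c) p.
  by case/hasP: Hh => z zc zp; apply/hasP; exists z.
case: (leqP (find (mem c) p) (find (mem c) (rev p))) => H; first exact: oriented.
apply: Concl_rev; apply: oriented => //.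
- by move: Hp; rewrite /is_path rev_uniq size_rev.
- by move=> x y; rewrite pe_rev.
- by rewrite has_rev.
- by move=> d m H1 H2; apply: Hg H1 _ => x y /H2; rewrite pe_rev.
- by rewrite revK ltnW.
Qed.

End M.


Definition edges (s : seq nat) : seq (nat * nat) := zip s (behead s).
Definition sin (E : seq (nat * nat)) (e : nat * nat) : bool :=
  has (fun e' => sedge e'.1 e'.2 e.1 e.2) E.
Definition SC : seq nat := iota 0 6.
Definition EC : seq (nat * nat) := edges (rcons SC 0).
Definition symP (f : seq nat) : seq nat :=
  [seq (if nth 6 f j < 6 then nth 6 f j else j + 6) | j <- iota 0 7].
Definition EH (f : seq nat) := EC ++ edges (symP f).
Definition VV (f : seq nat) := SC ++ symP f.

Definition nbrs (E : seq (nat * nat)) (x : nat) : seq nat :=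
  [seq (if e.1 == x then e.2 else e.1) | e <- E & (e.1 == x) || (e.2 == x)].
Definition triangleE (E : seq (nat * nat)) : bool :=
  has (fun e => has (fun z => [&& z != e.1, z != e.2, e.1 != e.2 & z \in nbrs E e.2])
                    (nbrs E e.1)) E.
Definition triangle (f : seq nat) : bool := triangleE (EH f).

Definition valid (f : seq nat) : bool :=
  if has (fun x => x < 6) f then
    if has (sin EC) (edges (symP f)) then false else ~~ triangle f
  else false.

Definition dec_okE (E : seq (nat * nat)) (V : seq nat) (s1 s2 : seq nat) : bool :=
  [&& uniq s1, uniq s2, size s1 \in [:: 6; 7; 8], size s2 \in [:: 6; 7; 8],
      all (mem V) s1, all (mem V) s2,
      all (sin (edges s1 ++ edges s2)) E,
      all (sin E) (edges s1 ++ edges s2) &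
      ~~ has (sin (edges s2)) (edges s1)].
Definition dec_ok (f : seq nat) (s1 s2 : seq nat) : bool := dec_okE (EH f) (VV f) s1 s2.

Fixpoint ext (E : seq (nat * nat)) (n : nat) (s : seq nat) : seq (seq nat) :=
  match n with
  | 0 => [:: s]
  | n'.+1 => s :: flatten [seq ext E n' (z :: s) | z <- nbrs E (head 0 s) & z \notin s]
  end.

Definition paths (f : seq nat) : seq (seq nat) :=
  [seq s <- ext (EH f) 7 [:: head 0 (symP f)] | size s \in [:: 6; 7; 8]].

Fixpoint walk (E : seq (nat * nat)) (n : nat) (x : nat) : seq nat :=
  match n with
  | 0 => [:: x]
  | n'.+1 =>
    match [seq e <- E | (e.1 == x) || (e.2 == x)] with
    | [::] => [:: x]
    | e :: _ => let y := if e.1 == x then e.2 else e.1 in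
                x :: walk (rem e E) n' y
    end
  end.

Definition deg (E : seq (nat * nat)) (x : nat) := count (fun e => (e.1 == x) || (e.2 == x)) E.

Definition try1 (E : seq (nat * nat)) (V : seq nat) (s1 : seq nat) : option (seq nat) :=
  let R := [seq e <- E | ~~ sin (edges s1) e] in
  let st := nth 0 [seq z <- V | deg R z == 1] 0 in
  let s2 := walk R 12 st in
  if (size s2 == (size R).+1) && uniq s2 then Some s2 else None.

Fixpoint firstok (E : seq (nat * nat)) (V : seq nat) (l : seq (seq nat)) : option (seq nat * seq nat) :=
  match l with
  | [::] => None
  | s1 :: l' => if try1 E V s1 is Some s2 then Some (s1, s2) else firstok E V l'
  end.

Definition good (f : seq nat) : bool :=
  if valid f then
    (if firstok (EH f) (undup (VV f)) (paths f) is Some (s1, s2)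
     then dec_ok f s1 s2 else false)
  else true.

Fixpoint chk (n : nat) (pre : seq nat) : bool :=
  match n with
  | 0 => good (rev pre)
  | n'.+1 => all (fun x => if (x < 6) && (x \in pre) then true else chk n' (x :: pre)) (iota 0 7)
  end.

Lemma chk_ok : chk 7 [::] = true.
Proof. vm_compute. reflexivity. Qed.


Lemma chk_sound n pre : chk n pre -> forall f, size f = n -> all (fun x => x < 7) f ->
  uniq (filter (fun x => x < 6) (rev pre ++ f)) -> good (rev pre ++ f).
Proof.
elim: n pre => [|n IH] pre.
  by move=> H [|??] // _ _; rewrite cats0.
move=> H0 [|x f'] // [Sf] /andP [x7 Hf] U.
have /allP H : all (fun x => if (x < 6) && (x \in pre) then true else chk n (x :: pre)) (iota 0 7)
  := H0.
have := H x; rewrite mem_iota add0n x7 => /(_ isT).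
case: ifP => [/andP [x6 xp] _|_ Hc].
  move: U; rewrite filter_cat /= x6 cat_uniq => /and3P [_ /hasPn /(_ x) + _].
  by move=> /(_ (mem_head _ _)); rewrite mem_filter x6 mem_rev xp.
have := IH _ Hc f' Sf Hf; rewrite rev_cons cat_rcons; apply.
exact: U.
Qed.

Lemma good_all f : size f = 7 -> all (fun x => x < 7) f ->
  uniq (filter (fun x => x < 6) f) -> good f.
Proof. by move=> S A U; have := chk_sound chk_ok S A U. Qed.

Section K3.
Variables (T : eqType) (x0 : T) (c p : seq T).
Hypotheses (Uc : uniq c) (Sc : size c = 6) (Up : uniq p) (Sp : size p = 7).
Hypotheses (Hd : Hdis c p) (Hg : Hgir 3 c p) (Hh : has (fun v => v \in p) c).

Let f := map (fun x => index x c) p.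
Let g (s : nat) : T := if s < 6 then nth x0 c s else nth x0 p (s - 6).
Let G (x y : T) (e : nat * nat) := sedge (g e.1) (g e.2) x y.

Lemma nth_f j : j < 7 -> nth 6 f j = index (nth x0 p j) c.
Proof. by move=> hj; rewrite (nth_map x0) // Sp. Qed.

Lemma gC i : i < 6 -> g i = nth x0 c i.
Proof. by rewrite /g => ->. Qed.

Lemma gP j : g (j + 6) = nth x0 p j.
Proof. by rewrite /g ltnNge leq_addl /= addnK. Qed.

Lemma mapSC : map g SC = c.
Proof.
rewrite /SC -[in RHS](mkseq_nth x0 c) Sc /mkseq; apply/eq_in_map => i.
by rewrite mem_iota add0n => /andP [_ h]; rewrite gC.
Qed.

Lemma mapSP : map g (symP f) = p.
Proof.
rewrite /symP -map_comp -[in RHS](mkseq_nth x0 p) Sp /mkseq; apply/eq_in_map => j.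
rewrite mem_iota add0n => /andP [_ hj] /=.
rewrite nth_f //; case: ifP => h; last exact: gP.
by rewrite gC // nth_index // -index_mem Sc.
Qed.

Lemma memV s : s \in VV f -> s < 6 \/ exists2 j, j < 7 & s = j + 6 /\ nth x0 p j \notin c.
Proof.
rewrite mem_cat => /orP [|]; first by rewrite mem_iota add0n => /andP [_ h]; left.
case/mapP => j; rewrite mem_iota add0n => /andP [_ hj] ->.
rewrite nth_f //; case: ifP => h; first by left.
right; exists j => //; split => //.
by rewrite -index_mem Sc h.
Qed.

Lemma injV : {in VV f &, injective g}.
Proof.
move=> s1 s2 /memV [h1|[j1 hj1 [-> n1]]] /memV [h2|[j2 hj2 [-> n2]]].
- rewrite !gC // => E; apply/eqP; rewrite -(nth_uniq x0 _ _ Uc) ?Sc //; exact/eqP.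
- by rewrite (gC h1) gP => E; move: n2; rewrite -E mem_nth // Sc.
- by rewrite (gC h2) gP => E; move: n1; rewrite E mem_nth // Sc.
- rewrite !gP => E; congr (_ + _); apply/eqP; rewrite -(nth_uniq x0 _ _ Up) ?Sp //; exact/eqP.
Qed.

Lemma pe_map s x y : path_edge (map g s) x y = has (G x y) (edges s).
Proof.
elim: s => [|a s IH] //; case: s IH => [|b s] IH //.
by rewrite map_cons map_cons pe_cons2 -map_cons IH.
Qed.

Lemma ceC x y : cycle_edge c x y = path_edge (map g (rcons SC 0)) x y.
Proof. by rewrite -{1}mapSC map_rcons. Qed.

Lemma Hrel x y : cycle_edge c x y || path_edge p x y = has (G x y) (EH f).
Proof. by rewrite ceC -[in path_edge p]mapSP !pe_map /EH has_cat. Qed.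

Lemma sedge_map (a b u w : nat) : sedge a b u w -> sedge (g a) (g b) (g u) (g w).
Proof. by rewrite /sedge => /orP [/andP [/eqP-> /eqP->]|/andP [/eqP-> /eqP->]]; rewrite !eqxx ?orbT. Qed.

Lemma sedge_unmap (a b u w : nat) : a \in VV f -> b \in VV f -> u \in VV f -> w \in VV f ->
  sedge (g a) (g b) (g u) (g w) -> sedge a b u w.
Proof.
move=> ha hb hu hw; rewrite /sedge => /orP [/andP [/eqP E1 /eqP E2]|/andP [/eqP E1 /eqP E2]].
  by rewrite (injV ha hu E1) (injV hb hw E2) !eqxx.
by rewrite (injV ha hw E1) (injV hb hu E2) !eqxx orbT.
Qed.

Lemma has_sub A B x y : all (sin B) A -> has (G x y) A -> has (G x y) B.
Proof.
move=> /allP HA /hasP [e eA He]; have /hasP [e' e'B Hs] := HA e eA.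
apply/hasP; exists e' => //; rewrite /G.
by rewrite -(sedge_trans _ _ (sedge_map Hs)).
Qed.

Lemma sedge_sym (a b x y : T) : sedge a b x y = sedge x y a b.
Proof. rewrite /sedge (eq_sym x a) (eq_sym y b) (eq_sym x b) (eq_sym y a).
by case: (a == x); case: (b == y); case: (a == y); case: (b == x). Qed.

Lemma sedge_both (a b u w x y : T) : sedge a b x y -> sedge u w x y -> sedge u w a b.
Proof. by rewrite sedge_sym => H1 H2; rewrite -(sedge_trans _ _ H2). Qed.

Lemma edges_mem s e : e \in edges s -> (e.1 \in s) && (e.2 \in s).
Proof.
elim: s => [|a s IH] //; case: s IH => [|b s] IH //.
rewrite /edges /= inE => /orP [/eqP -> /=|H].
  by rewrite !inE !eqxx orbT.
move: (IH H) => /andP [h1 h2]; apply/andP; split; rewrite in_cons; apply/orP; right; [exact: h1|exact: h2].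
Qed.

Lemma nbrs_sin E (x z : nat) : z \in nbrs E x -> exists2 e, e \in E & sedge e.1 e.2 x z.
Proof.
rewrite /nbrs => /mapP [e]; rewrite mem_filter => /andP [/orP [/eqP h|/eqP h] eE] ->.
  by exists e => //; rewrite h eqxx sedge_refl.
exists e => //; case: ifP => [/eqP h'|_]; rewrite h.
  by rewrite h' sedge_refl.
by rewrite sedgeC2 sedge_refl.
Qed.

Lemma EH_mem e : e \in EH f -> (e.1 \in VV f) && (e.2 \in VV f).
Proof.
rewrite mem_cat => /orP [H|H]; move: (edges_mem H) => /andP [h1 h2].
  move: h1 h2; rewrite /VV !mem_cat !mem_rcons !inE.
  by case/orP => [/eqP->|->] /orP [/eqP->|->]; rewrite ?orbT.
by rewrite /VV !mem_cat h1 h2 !orbT.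
Qed.

Lemma sin_H (u w : nat) x y : sin (EH f) (u, w) -> sedge (g u) (g w) x y ->
  cycle_edge c x y || path_edge p x y.
Proof.
move=> /hasP [e eE Hs] H; rewrite Hrel; apply/hasP; exists e => //.
by rewrite /G -(sedge_trans _ _ (sedge_map Hs)).
Qed.

Lemma valid_f : valid f.
Proof.
rewrite /valid.
have -> : has (fun x => x < 6) f.
  case/hasP: Hh => z zc zp; apply/hasP; exists (index z c).
    by apply/mapP; exists z.
  by rewrite -Sc index_mem.
case: ifP => [/hasP [e eP /hasP [e' e'C Hs]]|_].
  have HP : path_edge p (g e.1) (g e.2).
    by rewrite -mapSP pe_map; apply/hasP; exists e => //; rewrite /G sedge_refl.
  have HC : cycle_edge c (g e'.1) (g e'.2).
    by rewrite ceC pe_map; apply/hasP; exists e' => //; rewrite /G sedge_refl.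
  have HC' := ce_sedge HC (sedge_map Hs).
  by move: (Hd (g e.1) (g e.2)); rewrite HC' HP.
apply/negP => /hasP [e eH /hasP [z zn /and4P [nz1 nz2 n12 zn2]]].
have [e1 e1E s1] := nbrs_sin zn.
have [e2 e2E s2] := nbrs_sin zn2.
move: (EH_mem eH) (EH_mem e1E) (EH_mem e2E) => /andP [v1 v2] /andP [v3 v4] /andP [v5 v6].
have vz : z \in VV f.
  move: (sedge_memy s1); case/orP => /eqP ->; by [].
have gne a b : a \in VV f -> b \in VV f -> a != b -> g a != g b.
  by move=> ha hb; apply: contra => /eqP /(injV ha hb) ->.
have := Hg (d := [:: g e.1; g e.2; g z]) (m := 3).
rewrite /is_cycle /= !inE !negb_or !gne // ?(eq_sym e.2) ?(eq_sym e.1) //= => /(_ isT).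
have H12 : sin (EH f) (e.1, e.2) by apply/hasP; exists e => //; rewrite sedge_refl.
have H2z : sin (EH f) (e.2, z) by apply/hasP; exists e2.
have Hz1 : sin (EH f) (z, e.1) by apply/hasP; exists e1 => //; rewrite sedgeC2.
suff : forall x y, cycle_edge [:: g e.1; g e.2; g z] x y -> cycle_edge c x y || path_edge p x y.
  by move=> H /(_ H).
move=> x y; rewrite ce_cons /= !pe_cons2 pe_1 orbF => /or3P [H|H|H].
- exact: sin_H H12 H.
- exact: sin_H H2z H.
- exact: sin_H Hz1 H.
Qed.

Lemma k3 : Concl 3 c p.
Proof.
have Sf : size f = 7 by rewrite size_map.
have Af : all (fun x => x < 7) f.
  apply/allP => z /mapP [x _ ->]; by rewrite ltnS -Sc index_size.
have Uf : uniq (filter (fun x => x < 6) f).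
  rewrite filter_map map_inj_in_uniq ?filter_uniq //.
  move=> a b; rewrite !mem_filter /preim /= -!Sc !index_mem => /andP [ac _] /andP [bc _] E.
  by rewrite -(nth_index x0 ac) E nth_index.
have := good_all Sf Af Uf; rewrite /good valid_f.
case: (firstok _ _ _) => [[s1 s2]|] // Hok.
move: Hok; rewrite /dec_ok /dec_okE.
move=> /andP [u1 /andP [u2 /andP [z1 /andP [z2 /andP [m1 /andP [m2 /andP [i1 /andP [i2 dj]]]]]]]].
have inj1 : {in s1 &, injective g}.
  by move=> a b ha hb; apply: injV; [move/allP: m1; apply | move/allP: m1; apply].
have inj2 : {in s2 &, injective g}.
  by move=> a b ha hb; apply: injV; [move/allP: m2; apply | move/allP: m2; apply].
have sz (s : seq nat) : size s \in [:: 6; 7; 8] -> (size s).-1 \in [:: 2 * 3 - 1; 2 * 3; 2 * 3 + 1].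
  by rewrite !inE => /or3P [/eqP->|/eqP->|/eqP->].
have sz2 (s : seq nat) : size s \in [:: 6; 7; 8] -> size s = (size s).-1.+1.
  by rewrite !inE => /or3P [/eqP->|/eqP->|/eqP->].
exists (map g s1), (map g s2), (size s1).-1, (size s2).-1; split.
- split; rewrite /is_path size_map -sz2 // eqxx andbT map_inj_in_uniq //.
- exact: sz.
- exact: sz.
- move=> x y; rewrite Hrel !pe_map -has_cat.
  apply/idP/idP; [exact: has_sub i1 | exact: has_sub i2].
- move=> x y; rewrite !pe_map; apply/negP => /andP [/hasP [e1 e1s H1] /hasP [e2 e2s H2]].
  move: (edges_mem e1s) (edges_mem e2s) => /andP [a1 b1] /andP [a2 b2].
  have V z s : z \in s -> all (mem (VV f)) s -> z \in VV f by move=> zs /allP; apply.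
  have := sedge_both H1 H2 => /sedge_unmap.
  move=> /(_ (V _ _ a2 m2) (V _ _ b2 m2) (V _ _ a1 m1) (V _ _ b1 m1)) Hs.
  move/hasPn: dj => /(_ e1 e1s); apply/negP; rewrite negbK.
  by apply/hasP; exists e2.
Qed.

End K3.

Theorem mainTheorem8 (T : eqType) (k : nat) (c p : seq T) :
  3 <= k ->
  is_cycle c (2 * k) ->
  is_path p (2 * k) ->
  (* E(C) and E(P) are disjoint *)
  (forall x y, ~~ (cycle_edge c x y && path_edge p x y)) ->
  (* V(C) and V(P) intersect *)
  has (fun v => v \in p) c ->
  (* H = C ∪ P has girth at least 2k-2: every cycle contained in H has length >= 2k-2 *)
  (forall (d : seq T) (m : nat), is_cycle d m ->
     (forall x y, cycle_edge d x y -> cycle_edge c x y || path_edge p x y) ->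
     2 * k - 2 <= m) ->
  (* H decomposes into two paths with lengths in {2k-1, 2k, 2k+1} *)
  exists (q1 q2 : seq T) (l1 l2 : nat),
    [/\ is_path q1 l1 /\ is_path q2 l2,
        l1 \in [:: 2 * k - 1; 2 * k; 2 * k + 1],
        l2 \in [:: 2 * k - 1; 2 * k; 2 * k + 1],
        (forall x y, (cycle_edge c x y || path_edge p x y) =
                     (path_edge q1 x y || path_edge q2 x y)) &
        (forall x y, ~~ (path_edge q1 x y && path_edge q2 x y))].
Proof.
move=> kge3 Hc Hp Hd Hh Hg.
case: (ltnP 3 k) => k4; first exact: (main4 k4 Hc Hp Hd Hh Hg).
have k3e : k = 3 by apply/eqP; rewrite eqn_leq k4 kge3.
subst k.
move: Hc Hp => /andP [/andP [Uc /eqP Sc] _] /andP [Up /eqP Sp].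
case: c Uc Sc Hd Hh Hg => [|x0 c'] Uc Sc Hd Hh Hg; first by [].
exact: (k3 x0 Uc Sc Up Sp Hd Hg Hh).
Qed.
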